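(* Let $v \ge 81$ be an integer. Then \[ \beta(2,v,4) \le \left\lfloor \frac{2v-3}{3} \right\rfloor, \] and \[ \beta(2,v,4) \ge \begin{cases} \frac{2v-6}{3} & \text{if } v \equiv 0 \pmod 3,\\ \frac{2v-8}{3} & \text{if } v \equiv 1 \pmod 3,\\ \frac{2v-4}{3} & \text{if } v \equiv 2 \pmod 3. \end{cases} \]
   Context: For integers $v \ge k \ge 2$, a $(v,k)$-packing is a pair $(X,\mathcal{B})$ where $X$ is a set of $v$ points and $\mathcal{B}$ is a set of $k$-subsets of $X$ (blocks) such that every pair of distinct points lies in at most one block. A partial parallel class (PPC) is a set of pairwise disjoint blocks; its size is the number of blocks. A PPC of size $\rho$ is maximum if the packing has no PPC of size $\rho+1$. $\beta(\rho,v,k)$ denotes the maximum number of blocks in a $(v,k)$-packing in which the maximum PPC has size $\rho$. *)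

(* Defs.v *)
From mathcomp Require Import all_boot.
Set Implicit Arguments. Unset Strict Implicit. Unset Printing Implicit Defensive.

Definition is_packing (v k : nat) (F : {set {set 'I_v}}) : bool :=
  [forall B in F, #|B| == k] &&
  [forall x : 'I_v, forall y : 'I_v,
     (x != y) ==> (#|[set B in F | (x \in B) && (y \in B)]| <= 1)].

Definition is_ppc (v : nat) (F P : {set {set 'I_v}}) : bool :=
  (P \subset F) &&
  [forall B1 in P, forall B2 in P, (B1 != B2) ==> [disjoint B1 & B2]].

Definition has_ppc_of_size (v : nat) (F : {set {set 'I_v}}) (r : nat) : bool :=
  [exists P : {set {set 'I_v}}, is_ppc F P && (#|P| == r)].

Definition max_ppc_size (v : nat) (F : {set {set 'I_v}}) (rho : nat) : bool :=
  has_ppc_of_size F rho && ~~ has_ppc_of_size F rho.+1.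

(* beta(rho,v,k): maximum number of blocks of a (v,k)-packing whose maximum
   PPC has size rho (0 if there is no such packing). *)
Definition beta (rho v k : nat) : nat :=
  \max_(F : {set {set 'I_v}} | is_packing k F && max_ppc_size F rho) #|F|.

(* Main.v *)
Require Import Defs.
From mathcomp Require Import all_boot.
From mathcomp Require Import zify.
Set Implicit Arguments. Unset Strict Implicit. Unset Printing Implicit Defensive.

Lemma card_sum (T : finType) (A B : {set T}) :
  #|A :&: B| = \sum_(x in B) (x \in A).
Proof.
rewrite -sum1_card (eq_bigl (fun x => (x \in B) && (x \in A))); last first.
  by move=> x; rewrite inE andbC.
by rewrite big_mkcondr; apply: eq_bigr => x _; case: (x \in A).
Qed.

Lemma dc (T : finType) (S : {set {set T}}) (D : {set T}) :
  \sum_(B in S) #|B :&: D| = \sum_(x in D) #|[set B in S | x \in B]|.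
Proof.
under eq_bigr do rewrite card_sum.
rewrite exchange_big /=; apply: eq_bigr => x _.
rewrite -(setIT [set B in S | x \in B]) card_sum big_mkcond /=.
rewrite [RHS]big_mkcond /=; apply: eq_bigr => B _; rewrite !inE; by case: (B \in S).
Qed.

Lemma disjE (T : finType) (A B : {set T}) : [disjoint A & B] = (#|A :&: B| == 0).
Proof. by rewrite cards_eq0 setI_eq0. Qed.

Lemma disjP (T : finType) (A B : {set T}) :
  reflect (forall x, x \in A -> x \notin B) [disjoint A & B].
Proof.
rewrite -setI_eq0; apply: (iffP eqP) => [e x xA|h].
  apply/negP => xB; have : x \in A :&: B by rewrite inE xA xB.
  by rewrite e inE.
apply/setP => x; rewrite !inE; apply/negP => /andP[xA xB].
by move: (h x xA); rewrite xB.
Qed.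

Definition star (T : finType) (S : {set {set T}}) (p : T) := [set B in S | p \in B].

Section Upper.
Variable v : nat.
Variable F : {set {set 'I_v}}.
Hypothesis hsz : forall B, B \in F -> #|B| = 4.
Hypothesis hlin : forall B1 B2, B1 \in F -> B2 \in F -> B1 != B2 -> #|B1 :&: B2| <= 1.
Hypothesis h3 : forall B1 B2 B3, B1 \in F -> B2 \in F -> B3 \in F ->
  [disjoint B1 & B2] -> [disjoint B1 & B3] -> [disjoint B2 & B3] -> False.

Lemma two_common B1 B2 p x : B1 \in F -> B2 \in F -> p != x ->
  p \in B1 -> x \in B1 -> p \in B2 -> x \in B2 -> B1 = B2.
Proof.
move=> h1 h2 px pB1 xB1 pB2 xB2.
case: (eqVneq B1 B2) => // ne; have := hlin h1 h2 ne.
have sub : [set p; x] \subset B1 :&: B2.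
  by apply/subsetP => y; rewrite !inE => /orP[] /eqP ->; rewrite ?pB1 ?pB2 ?xB1 ?xB2.
have := subset_leq_card sub; rewrite cards2 px; lia.
Qed.

Lemma L0 (S : {set {set 'I_v}}) (D : {set 'I_v}) p : S \subset F -> p \notin D ->
  (forall B, B \in S -> p \in B) -> \sum_(B in S) #|B :&: D| <= #|D|.
Proof.
move=> SF pD hp; rewrite dc -[#|D|]sum1_card; apply: leq_sum => x xD.
apply/card_le1_eqP => B1 B2; rewrite !inE => /andP[B1S xB1] /andP[B2S xB2].
apply: (two_common (p := p) (x := x)) => //; try exact: (subsetP SF); try exact: hp.
by apply: contraNneq pD => ->.
Qed.

Lemma L1 (S : {set {set 'I_v}}) (D : {set 'I_v}) p : S \subset F -> p \notin D ->
  (forall B, B \in S -> p \in B) -> (forall B, B \in S -> 0 < #|B :&: D|) ->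
  #|S| <= #|D|.
Proof.
move=> SF pD hp hm; apply: leq_trans (L0 SF pD hp).
by rewrite -sum1_card; apply: leq_sum => B /hm.
Qed.

Lemma L2 (S : {set {set 'I_v}}) (D : {set 'I_v}) p : S \subset F -> p \notin D ->
  (forall B, B \in S -> p \in B /\ B :\ p \subset D) -> 3 * #|S| <= #|D|.
Proof.
move=> SF pD hp; have := L0 SF pD (fun B h => (hp B h).1).
have -> : \sum_(B in S) #|B :&: D| = \sum_(B in S) 3.
  apply: eq_bigr => B BS; have [pB sub] := hp B BS.
  have -> : B :&: D = B :\ p.
    apply/setP => y; rewrite !inE; case: (eqVneq y p) => [->|yp] /=.
      by rewrite (negbTE pD) andbF.
    case yB: (y \in B) => //=; by rewrite (subsetP sub) // !inE yp yB.
  have := cardsD1 p B; rewrite pB hsz ?(subsetP SF) //; lia.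
by rewrite sum_nat_const mulnC.
Qed.

Lemma Int (G : {set {set 'I_v}}) : G \subset F ->
  (forall B C, B \in G -> C \in G -> 0 < #|B :&: C|) ->
  (exists q, forall B, B \in G -> q \in B) \/ #|G| <= 16.
Proof.
move=> GF hint.
case: (boolP [exists q, [forall B in G, q \in B]]) => [/existsP[q /forall_inP h]|hn].
  by left; exists q.
right; move/existsPn: hn => hn.
have deg4 : forall q, #|star G q| <= 4.
  move=> q; have /forall_inPn [D DG qD] := hn q.
  rewrite -(hsz (subsetP GF _ DG)).
  apply: (L1 (p := q)) => //.
  - by apply/subsetP => B; rewrite inE => /andP[/(subsetP GF)].
  - by move=> B; rewrite inE => /andP[].
  - by move=> B; rewrite inE => /andP[BG _]; apply: hint.
case: (set_0Vmem G) => [-> | [C CG]]; first by rewrite cards0.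
apply: (@leq_trans (\sum_(B in G) #|B :&: C|)).
  by rewrite -sum1_card; apply: leq_sum => B BG; apply: hint.
rewrite dc; apply: (@leq_trans (\sum_(x in C) 4)).
  by apply: leq_sum => x _; apply: deg4.
by rewrite sum_nat_const hsz ?(subsetP GF).
Qed.


Lemma starF p : star F p \subset F.
Proof. by apply/subsetP => B; rewrite inE => /andP[]. Qed.

Lemma SB p : 3 * #|star F p| <= v - 1.
Proof.
have <- : #|[set~ p]| = v - 1 by rewrite cardsC1 card_ord; lia.
apply: (L2 (p := p)); rewrite ?starF ?inE ?eqxx //.
move=> B; rewrite inE => /andP[_ pB]; split => //.
by apply/subsetP => y; rewrite !inE => /andP[].
Qed.

Lemma SB2 p q : p != q -> (forall B, B \in F -> p \in B -> q \notin B) ->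
  3 * #|star F p| <= v - 2.
Proof.
move=> pq hq.
have <- : #|~: [set p; q]| = v - 2.
  by have := cardsC [set p; q]; rewrite cards2 pq card_ord; lia.
apply: (L2 (p := p)); rewrite ?starF ?inE ?eqxx //.
move=> B; rewrite inE => /andP[BF pB]; split => //.
apply/subsetP => y; rewrite !inE => /andP[yp yB]; rewrite negb_or yp /=.
by apply: contraNneq (hq B BF pB) => <-.
Qed.

Lemma splitF (P : pred {set 'I_v}) :
  #|F| = #|[set B in F | P B]| + #|[set B in F | ~~ P B]|.
Proof.
rewrite -(cardsID [set B | P B] F); congr addn; apply: eq_card => B;
  by rewrite !inE // andbC.
Qed.

Lemma upper : 81 <= v -> #|F| <= (2 * v - 3) %/ 3.
Proof.
move=> hv.
case: (boolP [exists p, 9 <= #|star F p|]) => [/existsP[p hp]|hn].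
  pose F2 := [set B in F | p \notin B].
  have F2F : F2 \subset F by apply/subsetP => B; rewrite inE => /andP[].
  have eF : #|F| = #|star F p| + #|F2| by apply: splitF.
  have hsp := SB p.
  have hint : forall B C, B \in F2 -> C \in F2 -> 0 < #|B :&: C|.
    move=> B C; rewrite !inE => /andP[BF pB] /andP[CF pC].
    rewrite lt0n -disjE; apply/negP => dBC.
    have : #|star F p| <= #|B :|: C|.
      apply: (L1 (p := p)); rewrite ?starF ?inE ?negb_or ?pB ?pC //.
        by move=> A; rewrite inE => /andP[].
      move=> A; rewrite inE => /andP[AF pA]; rewrite lt0n; apply/negP => /eqP h0.
      apply: (h3 AF BF CF) => //.
        rewrite disjE -leqn0 -h0; apply: subset_leq_card; apply: setIS; exact: subsetUl.
      rewrite disjE -leqn0 -h0; apply: subset_leq_card; apply: setIS; exact: subsetUr.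
    have := (leq_card_setU B C).1; rewrite (hsz BF) (hsz CF); lia.
  case: (Int F2F hint) => [[q hq]|h16]; last by lia.
  case: (eqVneq q p) => [qp|qp].
    rewrite eF; have -> : F2 = set0.
      apply/setP => B; rewrite !inE; apply/negP => /andP[BF pB].
      have BF2 : B \in F2 by rewrite inE BF pB.
      by have := hq B BF2; rewrite qp (negbTE pB).
    rewrite cards0; lia.
  have F2q : F2 \subset star F q.
    apply/subsetP => B BF2; rewrite inE (hq B BF2) andbT.
    by move: BF2; rewrite inE => /andP[].
  have hsq := SB q.
  case: (boolP [exists B in F, (p \in B) && (q \in B)]).
    move=> /exists_inP[B0 B0F /andP[pB0 qB0]].
    have : #|F2| < #|star F q|.
      apply: proper_card; apply/properP; split => //; exists B0.
        by rewrite inE B0F.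
      by rewrite !inE pB0 andbF.
    lia.
  move/exists_inPn => hno.
  have h1 : 3 * #|star F p| <= v - 2.
    apply: (@SB2 p q); first by rewrite eq_sym.
    by move=> B BF pB; apply/negP => qB; have := hno B BF; rewrite pB qB.
  have h2 : 3 * #|star F q| <= v - 2.
    apply: (@SB2 q p); first by [].
    by move=> B BF qB; apply/negP => pB; have := hno B BF; rewrite pB qB.
  have := subset_leq_card F2q; lia.
move/existsPn: hn => hn.
have deg8 : forall p, #|star F p| <= 8 by move=> p; have := hn p; lia.
case: (set_0Vmem F) => [-> | [B BF]]; first by rewrite cards0.
rewrite (splitF (fun C => 0 < #|C :&: B|)).
have hM : #|[set C in F | 0 < #|C :&: B|]| <= 32.
  apply: (@leq_trans (\sum_(C in [set C in F | 0 < #|C :&: B|]) #|C :&: B|)).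
    by rewrite -sum1_card; apply: leq_sum => C; rewrite inE => /andP[].
  rewrite dc; apply: (@leq_trans (\sum_(x in B) 8)); last first.
    by rewrite sum_nat_const hsz.
  apply: leq_sum => x _; apply: leq_trans (deg8 x); apply: subset_leq_card.
  by apply/subsetP => C; rewrite !inE => /andP[/andP[-> _] ->].
pose G := [set C in F | ~~ (0 < #|C :&: B|)].
have GF : G \subset F by apply/subsetP => C; rewrite inE => /andP[].
have hint : forall C1 C2, C1 \in G -> C2 \in G -> 0 < #|C1 :&: C2|.
  move=> C1 C2; rewrite !inE !lt0n !negbK -!disjE => /andP[C1F d1] /andP[C2F d2].
  apply/negP => d12.
  by apply: (h3 C1F C2F BF).
have hG : #|G| <= 16.
  case: (Int GF hint) => [[q hq]|//].
  apply: (@leq_trans #|star F q|); last by apply: leq_trans (deg8 q) _.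
  apply: subset_leq_card; apply/subsetP => C CG.
  by rewrite inE (hq C CG) andbT (subsetP GF).
rewrite -/G; lia.
Qed.

End Upper.

Definition inX (i a : nat) := [|| a == 0, a == 3 * i + 2, a == 3 * i + 3 | a == 3 * i + 4].
Definition inY (m i a : nat) := [|| a == 1, a == i + 2, a == i + m + 2 | a == i + 2 * m + 2].
Lemma arXX a b i j : a != b -> inX i a -> inX i b -> inX j a -> inX j b -> i = j.
Proof. rewrite /inX; lia. Qed.
Lemma arYY m a b i j : 4 <= m -> i < m -> j < m -> a != b -> inY m i a -> inY m i b -> inY m j a -> inY m j b -> i = j.
Proof. rewrite /inY; lia. Qed.
Lemma arXY m a b i j : 4 <= m -> i < m -> j < m -> a != b -> inX i a -> inX i b -> inY m j a -> inY m j b -> False.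
Proof. rewrite /inX /inY; lia. Qed.
Lemma ar03 m a : 4 <= m -> inX 0 a -> inY m 3 a -> False.
Proof. rewrite /inX /inY; lia. Qed.

Section Lower.
Variable n : nat.
Local Notation v := n.+1.

Lemma eq_inord (p : 'I_v) k : k <= n -> (p == inord k) = (val p == k).
Proof. by move=> hk; apply/eqP/eqP => [->|<-]; [exact: inordK | by rewrite inord_val]. Qed.

Definition blk (s : seq nat) : {set 'I_v} := [set p : 'I_v | val p \in s].

Lemma card_blk s : uniq s -> all (fun k => k <= n) s -> #|blk s| = size s.
Proof.
elim: s => [|x s IH] /=; first by move=> _ _; apply/eqP; rewrite cards_eq0; apply/eqP/setP => p; rewrite !inE.
move=> /andP[xs us] /andP[xn sn].
have -> : blk (x :: s) = inord x |: blk s.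
  by apply/setP => p; rewrite !inE eq_inord.
rewrite cardsU1 IH // inE. have -> : \val (inord x : 'I_v) = x by apply: inordK.
by rewrite xs.
Qed.

Lemma mem_blk_inord s k : k <= n -> (inord k \in blk s) = (k \in s).
Proof. by move=> hk; rewrite inE; have -> : \val (inord k : 'I_v) = k by apply: inordK. Qed.

Variable m : nat.
Hypothesis hm4 : 4 <= m.
Hypothesis hmn : 3 * m + 2 <= v.

Definition X (i : 'I_m) := blk [:: 0; 3 * i + 2; 3 * i + 3; 3 * i + 4].
Definition Y (i : 'I_m) := blk [:: 1; i + 2; i + m + 2; i + 2 * m + 2].

Lemma memX i p : (p \in X i) = [|| val p == 0, val p == 3 * i + 2, val p == 3 * i + 3 | val p == 3 * i + 4].
Proof. by rewrite !inE. Qed.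
Lemma memY i p : (p \in Y i) = [|| val p == 1, val p == i + 2, val p == i + m + 2 | val p == i + 2 * m + 2].
Proof. by rewrite !inE. Qed.

Lemma cardX i : #|X i| = 4.
Proof. have hi := ltn_ord i; rewrite card_blk //= ?inE; lia. Qed.
Lemma cardY i : #|Y i| = 4.
Proof. have hi := ltn_ord i; rewrite card_blk //= ?inE; lia. Qed.

Definition Fc : {set {set 'I_v}} := [set X i | i : 'I_m] :|: [set Y i | i : 'I_m].

Lemma memF B : B \in Fc -> (exists i, B = X i) \/ (exists i, B = Y i).
Proof.
by rewrite inE => /orP[/imsetP[i _ ->]|/imsetP[i _ ->]]; [left|right]; exists i.
Qed.

Lemma in0X i : inord 0 \in X i.
Proof. by rewrite mem_blk_inord //= inE eqxx. Qed.
Lemma in1Y i : inord 1 \in Y i.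
Proof. by rewrite mem_blk_inord //= ?inE ?eqxx //; lia. Qed.
Lemma nin0Y i : inord 0 \notin Y i.
Proof. by rewrite mem_blk_inord //= !inE; lia. Qed.

Lemma cardF : 2 * m <= #|Fc|.
Proof.
rewrite cardsU.
have -> : [set X i | i : 'I_m] :&: [set Y i | i : 'I_m] = set0.
  apply/setP => B; rewrite !inE; apply/negP => /andP[/imsetP[i _ ->] /imsetP[j _ e]].
  by have := in0X i; rewrite e (negbTE (nin0Y j)).
rewrite cards0 subn0 !card_imset ?card_ord; first lia.
- move=> i j e; apply: val_inj; have hi := ltn_ord i; have hj := ltn_ord j.
  have : inord (i + 2) \in Y j by rewrite -e mem_blk_inord /= ?inE ?eqxx ?orbT //; lia.
  rewrite mem_blk_inord /= ?inE; lia.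
- move=> i j e; apply: val_inj; have hi := ltn_ord i; have hj := ltn_ord j.
  have : inord (3 * i + 2) \in X j by rewrite -e mem_blk_inord /= ?inE ?eqxx ?orbT //; lia.
  rewrite mem_blk_inord /= ?inE; lia.
Qed.

Lemma linF B1 B2 x y : B1 \in Fc -> B2 \in Fc -> x != y -> x \in B1 -> y \in B1 ->
  x \in B2 -> y \in B2 -> B1 = B2.
Proof.
move=> /memF h1 /memF h2 xy; have xy' : val x != val y by []; clear xy.
case: h1 => [[i ->]|[i ->]]; case: h2 => [[j ->]|[j ->]];
  rewrite ?memX ?memY => x1 y1 x2 y2; have hi := ltn_ord i; have hj := ltn_ord j.
- by congr X; apply: val_inj; apply: (arXX xy' x1 y1 x2 y2).
- by case: (arXY hm4 hi hj xy' x1 y1 x2 y2).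
- by case: (arXY hm4 hj hi xy' x2 y2 x1 y1).
- by congr Y; apply: val_inj; apply: (arYY hm4 hi hj xy' x1 y1 x2 y2).
Qed.

Lemma packF : is_packing 4 Fc.
Proof.
apply/andP; split.
  apply/forall_inP => B /memF [[i ->]|[i ->]]; by rewrite ?cardX ?cardY.
apply/forallP => x; apply/forallP => y; apply/implyP => xy.
apply/card_le1_eqP => B1 B2; rewrite !inE => /andP[h1 /andP[x1 y1]] /andP[h2 /andP[x2 y2]].
have h1' : B1 \in Fc by rewrite inE.
have h2' : B2 \in Fc by rewrite inE.
exact: esym (linF h1' h2' xy x1 y1 x2 y2).
Qed.

Lemma le1 (P : {set {set 'I_v}}) z :
  (forall B1 B2, B1 \in P -> B2 \in P -> B1 != B2 -> [disjoint B1 & B2]) ->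
  (forall B, B \in P -> z \in B) -> #|P| <= 1.
Proof.
move=> hd hz; apply/card_le1_eqP => B1 B2 h1 h2.
case: (eqVneq B2 B1) => // ne.
have := hd _ _ h2 h1 ne; move/disjP => /(_ z (hz _ h2)).
by rewrite hz.
Qed.

Lemma maxF : max_ppc_size Fc 2.
Proof.
have m0 : 0 < m by lia.
have m3 : 3 < m by lia.
pose i0 := Ordinal m0; pose j0 := Ordinal m3.
have d : [disjoint X i0 & Y j0].
  by apply/disjP => p; rewrite memX memY => h1; apply/negP => h2; apply: (ar03 hm4 h1 h2).
have XF : forall i, X i \in Fc by move=> i; rewrite inE; apply/orP; left; apply: imset_f.
have YF : forall i, Y i \in Fc by move=> i; rewrite inE; apply/orP; right; apply: imset_f.
apply/andP; split.
  apply/existsP; exists [set X i0; Y j0]; apply/andP; split; last first.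
    have ne : X i0 != Y j0.
      by apply/eqP => e; have := in0X i0; rewrite e (negbTE (nin0Y j0)).
    by rewrite cards2 ne.
  apply/andP; split.
    apply/subsetP => B; rewrite in_set2 => /orP[] /eqP ->; [exact: XF | exact: YF].
  apply/forall_inP => B1 h1; apply/forall_inP => B2 h2; apply/implyP => ne.
  move: h1 h2 ne; rewrite !inE => /orP[] /eqP -> /orP[] /eqP ->; rewrite ?eqxx //.
  by rewrite disjoint_sym.
apply/negP => /existsP [P /andP[/andP[PF /forall_inP hd] /eqP c3]].
have hd' : forall B1 B2, B1 \in P -> B2 \in P -> B1 != B2 -> [disjoint B1 & B2].
  by move=> B1 B2 h1 h2 ne; have /forall_inP := hd _ h1; move/(_ _ h2)/implyP; apply.
have a1 : #|P :&: [set B : {set 'I_v} | inord 0 \in B]| <= 1.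
  apply: (le1 (z := inord 0)).
    by move=> B1 B2; rewrite !inE => /andP[h1 _] /andP[h2 _]; apply: hd'.
  by move=> B; rewrite !inE => /andP[].
have a2 : #|P :\: [set B : {set 'I_v} | inord 0 \in B]| <= 1.
  apply: (le1 (z := inord 1)).
    by move=> B1 B2; rewrite !inE => /andP[_ h1] /andP[_ h2]; apply: hd'.
  move=> B; rewrite !inE => /andP[nB /(subsetP PF) /memF [[i e]|[i ->]]].
    by move: nB; rewrite e in0X.
  exact: in1Y.
by have := leq_add a1 a2; rewrite cardsID c3.
Qed.

Lemma lower : 2 * m <= beta 2 v 4.
Proof.
apply: leq_trans cardF _.
apply: (@leq_bigmax_cond _ (fun F : {set {set 'I_v}} => is_packing 4 F && max_ppc_size F 2) (fun F => #|F|) Fc).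
by rewrite packF maxF.
Qed.

End Lower.

Lemma in3 (T : finType) (B B1 B2 B3 : T) : B \in [set B1; B2; B3] -> [\/ B = B1, B = B2 | B = B3].
Proof. rewrite !inE => /orP[/orP[]|] /eqP ->; by [constructor 1 | constructor 2 | constructor 3]. Qed.

Lemma of_packing v (F : {set {set 'I_v}}) : is_packing 4 F -> max_ppc_size F 2 ->
  [/\ (forall B, B \in F -> #|B| = 4),
      (forall B1 B2, B1 \in F -> B2 \in F -> B1 != B2 -> #|B1 :&: B2| <= 1) &
      (forall B1 B2 B3, B1 \in F -> B2 \in F -> B3 \in F ->
        [disjoint B1 & B2] -> [disjoint B1 & B3] -> [disjoint B2 & B3] -> False)].
Proof.
move=> /andP[/forall_inP hs /forallP hpair] /andP[_ /negP hno].
have hsz : forall B, B \in F -> #|B| = 4 by move=> B /hs /eqP.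
split => //.
  move=> B1 B2 h1 h2 ne; rewrite leqNgt; apply/negP => /card_gt1P [x [y [xi yi xy]]].
  have := hpair x => /forallP /(_ y) /implyP /(_ xy).
  rewrite leqNgt => /negP; apply; apply/card_gt1P; exists B1, B2; split => //.
    by move: xi yi; rewrite !inE h1 => /andP[-> _] /andP[-> _].
  by move: xi yi; rewrite !inE h2 => /andP[_ ->] /andP[_ ->].
move=> B1 B2 B3 h1 h2 h3 d12 d13 d23.
have dne : forall A B : {set 'I_v}, A \in F -> [disjoint A & B] -> A != B.
  move=> A B hA; apply: contraTneq => e; rewrite disjE -e setIid (hsz _ hA).
  by [].
apply: hno; apply/existsP; exists [set B1; B2; B3]; apply/andP; split.
  apply/andP; split.
    by apply/subsetP => B /in3 [] ->.
  apply/forall_inP => A hA; apply/forall_inP => C hC.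
  apply/implyP => ne.
  by move: hA hC ne => /in3 [] -> /in3 [] ->;
    rewrite ?eqxx // => _; rewrite // disjoint_sym.
have n12 := dne _ _ h1 d12; have n13 := dne _ _ h1 d13; have n23 := dne _ _ h2 d23.
have -> : [set B1; B2; B3] = B1 |: (B2 |: [set B3]).
  by apply/setP => B; rewrite !inE orbA.
rewrite !cardsU1 cards1 !inE negb_or n12 n13 n23.
by [].
Qed.

Theorem theorem4p2 (v : nat) (hv : 81 <= v) :
  beta 2 v 4 <= (2 * v - 3) %/ 3 /\
  (v %% 3 = 0 -> (2 * v - 6) %/ 3 <= beta 2 v 4) /\
  (v %% 3 = 1 -> (2 * v - 8) %/ 3 <= beta 2 v 4) /\
  (v %% 3 = 2 -> (2 * v - 4) %/ 3 <= beta 2 v 4).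
Proof.
split.
  apply/bigmax_leqP => F /andP[hp hm].
  have [hsz hlin h3] := of_packing hp hm.
  exact: (upper hsz hlin h3 hv).
case: v hv => [//|n] hv.
pose m := (n.+1 - 2) %/ 3.
have hm4 : 4 <= m by rewrite /m; lia.
have hmn : 3 * m + 2 <= n.+1 by rewrite /m; lia.
have hl := lower hm4 hmn.
split; [|split] => hmod; apply: leq_trans hl; rewrite /m; lia.
Qed.
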